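(* Assume $\mathfrak p<\mathfrak t$ and let $\lambda=\mathfrak p$. Assume: (i) $\mathcal B=\{B_\alpha:\alpha<\lambda\}$ exemplifies $\mathfrak p$; (ii) $\kappa<\lambda$ is a regular cardinal and $\bar A=\langle A_i:i<\kappa\rangle\subseteq[\omega]^{\aleph_0}$ is $\subseteq^*$-decreasing such that $A_i\cap B$ is infinite for all $i<\kappa$, $B\in\mathcal B$, and every pseudo-intersection $A$ of $\{A_i:i<\kappa\}$ has finite intersection with some $B\in\mathcal B$; (iii) $\mathrm{pr}:\lambda\times\lambda\to\lambda$ is a bijection with $\mathrm{pr}(\alpha_1,\alpha_2)\ge\alpha_1,\alpha_2$. Then there is a sequence $\langle\bar\eta^\alpha:\alpha\le\lambda\rangle$ such that: (a) $\bar\eta^\alpha\in\mathbf S_{\bar A}$ for $\alpha<\lambda$, and $\bar\eta^\lambda\in\mathbf S$; (b) $\langle\bar\eta^\alpha:\alpha\le\lambda\rangle$ is $\le^*$-increasing; (c) for each $\alpha<\lambda$, for all sufficiently large $n\in\mathrm{dom}(\bar\eta^{\alpha+1})$ we have $\mathrm{set}(\eta^{\alpha+1}_n)\cap B_\alpha\neq\emptyset$; (d)+(e) if $\alpha=\mathrm{pr}(\beta,\gamma)$, then for every choice of $X\in\{B_\beta\}\cup\{A_\beta:\beta<\kappa\}$ and $Y\in\{B_\gamma\}\cup\{A_\gamma:\gamma<\kappa\}$ (i.e. $X=B_\beta$, or $X=A_\beta$ when $\beta<\kappa$; likewise for $Y$), for every $n\in\mathrm{dom}(\bar\eta^{\alpha+1})$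 we have $\mathrm{set}(\eta^{\alpha+1}_n)\cap X\neq\emptyset$ and $\mathrm{set}(\eta^{\alpha+1}_n)\cap Y\neq\emptyset$, and the truth value of $\min(\mathrm{set}(\eta^{\alpha+1}_n)\cap X)<\min(\mathrm{set}(\eta^{\alpha+1}_n)\cap Y)$ is the same for all $n\in\mathrm{dom}(\bar\eta^{\alpha+1})$.
   Context: $[\omega]^{\aleph_0}$ is the set of infinite subsets of $\omega$; $A\subseteq^*B$ means $A\setminus B$ is finite; $A$ is a pseudo-intersection of $\mathcal C$ if $A\in[\omega]^{\aleph_0}$ and $A\subseteq^*C$ for all $C\in\mathcal C$. $\mathfrak p$ is the least cardinality of a family $\mathcal B\subseteq[\omega]^{\aleph_0}$ all of whose finite subfamilies have infinite intersection but which has no pseudo-intersection; $\mathfrak t$ is the least length of a $\subseteq^*$-decreasing sequence in $[\omega]^{\aleph_0}$ with no pseudo-intersection. $\mathcal B$ exemplifies $\mathfrak p$ if it is closed under finite intersections, has no pseudo-intersection, and $|\mathcal B|=\mathfrak p$. $\mathbf S$ is the family of all sequences $\bar\eta=\langle\eta_n:n\in B\rangle$ with $B\subseteq\omega$ infinite such that for each $n\in B$, $\eta_n$ is a function from $[n,k)$ to $\{0,1\}$ for some $k\in(n,\omega)$; $\mathrm{dom}(\bar\eta)=B$, $\mathrm{set}(\eta_n)=\{\ell:\eta_n(\ell)=1\}$, $\mathrm{set}(\bar\eta)=\bigcup_n\mathrm{set}(\eta_n)$. $\mathbf S_{\bar A}$ is the set of $\bar\eta\in\mathbf S$ with $\mathrm{set}(\bar\eta)\subseteq^*A_i$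 for all $i<\kappa$ and $\mathrm{set}(\eta_n)\ne\emptyset$ for all $n\in\mathrm{dom}(\bar\eta)$. $\eta\trianglelefteq\nu$ means $\nu$ extends $\eta$; $\bar\eta\le^*\bar\nu$ means that for all sufficiently large $n$, if $n\in\mathrm{dom}(\bar\nu)$ then $n\in\mathrm{dom}(\bar\eta)$ and $\eta_n\trianglelefteq\nu_n$. *)

(* Defs.v *)
(* Subsets of omega are predicates nat -> Prop.
   Ordinals <= lambda are modelled by a type L with a strict well-order ltL
   (lambda = order type of L); ordinals < lambda are elements of L,
   lambda itself is treated separately. *)
From Stdlib Require Import List Arith Relations Wellfounded.

Definition nset := nat -> Prop.

Definition finiteN (A : nset) : Prop := exists N, forall n, A n -> n < N.
Definition infiniteN (A : nset) : Prop := ~ finiteN A.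

Definition subseteq_star (A B : nset) : Prop := finiteN (fun n => A n /\ ~ B n).

Definition pseudo_int (C : nset -> Prop) (A : nset) : Prop :=
  infiniteN A /\ forall X, C X -> subseteq_star A X.

Definition range_of {I : Type} (F : I -> nset) : nset -> Prop :=
  fun X => exists i, X = F i.

Definition sfip {I : Type} (F : I -> nset) : Prop :=
  forall s : list I, infiniteN (fun n => forall i, In i s -> F i n).

Definition p_family {I : Type} (F : I -> nset) : Prop :=
  sfip F /\ ~ (exists A, pseudo_int (range_of F) A).

Definition card_le (T U : Type) : Prop := exists f : T -> U, forall x y, f x = f y -> x = y.

Definition strict_well_order {L : Type} (lt : L -> L -> Prop) : Prop :=
  (forall a, ~ lt a a) /\ (forall a b c, lt a b -> lt b c -> lt a c) /\
  (forall a b, lt a b \/ a = b \/ lt b a) /\ well_founded lt.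

Definition seg {L : Type} (lt : L -> L -> Prop) (x : L) : Type := {y : L | lt y x}.

(* (L, lt) is (the order type of) the cardinal p:
   an initial ordinal, whose cardinality is the least cardinality of a family
   with the SFIP and no pseudo-intersection. *)
Definition lambda_is_p (L : Type) (lt : L -> L -> Prop) : Prop :=
  strict_well_order lt /\
  (forall x : L, ~ card_le L (seg lt x)) /\
  (exists F : L -> nset, p_family F) /\
  (forall (I : Type) (F : I -> nset), p_family F -> card_le L I).

(* p < t, with lambda = p the order type of (L, lt): every
   \subseteq^*-decreasing sequence in [omega]^aleph0 whose length is <= lambda
   (i.e. indexed by a subset of L with the induced order) has a pseudo-intersection. *)
Definition p_lt_t (L : Type) (lt : L -> L -> Prop) : Prop :=
  forall (Sx : L -> Prop) (D : L -> nset),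
    (forall a, Sx a -> infiniteN (D a)) ->
    (forall a b, Sx a -> Sx b -> lt a b -> subseteq_star (D b) (D a)) ->
    exists A, pseudo_int (fun X => exists a, Sx a /\ X = D a) A.

Definition exemplifies_p (L : Type) (B : L -> nset) : Prop :=
  (forall a, infiniteN (B a)) /\
  (forall a b, exists c, forall n, B c n <-> (B a n /\ B b n)) /\
  ~ (exists A, pseudo_int (range_of B) A) /\
  card_le L {X : nset | range_of B X} /\ card_le {X : nset | range_of B X} L.

Definition regular_cardinal {L : Type} (lt : L -> L -> Prop) (kappa : L) : Prop :=
  (forall b, lt b kappa -> ~ card_le (seg lt kappa) (seg lt b)) /\
  card_le nat (seg lt kappa) /\
  (forall X : L -> Prop, (forall x, X x -> lt x kappa) ->
     (forall i, lt i kappa -> exists x, X x /\ (i = x \/ lt i x)) ->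
     card_le (seg lt kappa) {x : L | X x}).

(* elements of the family S: eta_n for n in sdom is the function
   [n, send n) -> {0,1}, l |-> sval n l. Values outside are irrelevant. *)
Record seqS := mkS { sdom : nat -> Prop; send : nat -> nat; sval : nat -> nat -> bool }.

Definition inS (e : seqS) : Prop :=
  infiniteN (sdom e) /\ forall n, sdom e n -> n < send e n.

Definition setn (e : seqS) (n : nat) : nset :=
  fun l => n <= l /\ l < send e n /\ sval e n l = true.

Definition setS (e : seqS) : nset := fun l => exists n, sdom e n /\ setn e n l.

Definition inSA {L : Type} (lt : L -> L -> Prop) (kappa : L) (A : L -> nset) (e : seqS) : Prop :=
  inS e /\ (forall i, lt i kappa -> subseteq_star (setS e) (A i)) /\
  (forall n, sdom e n -> exists l, setn e n l).

Definition extends_at (e v : seqS) (n : nat) : Prop :=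
  send e n <= send v n /\ forall l, n <= l -> l < send e n -> sval e n l = sval v n l.

Definition le_star (e v : seqS) : Prop :=
  exists N, forall n, N <= n -> sdom v n -> sdom e n /\ extends_at e v n.

Definition is_succ {L : Type} (lt : L -> L -> Prop) (a a' : L) : Prop :=
  lt a a' /\ forall c, ~ (lt a c /\ lt c a').

Definition is_min (P : nset) (m : nat) : Prop := P m /\ forall k, P k -> m <= k.

Definition choiceXY {L : Type} (lt : L -> L -> Prop) (kappa : L) (A B : L -> nset)
  (b : L) (X : nset) : Prop := X = B b \/ (lt b kappa /\ X = A b).

(* Main.v *)
Require Import Defs.
From Stdlib Require Import List Arith.
From Stdlib Require Import List Arith Lia Classical ClassicalEpsilon FunctionalExtensionality Wellfounded.
From Stdlib Require Cantor.

Lemma inf_iff X : infiniteN X <-> forall K, exists n, K <= n /\ X n.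
Proof.
  split.
  - intros H K. apply NNPP. intro H1. apply H. exists K. intros n Hn.
    destruct (le_lt_dec K n) as [h|h]; [|exact h]. exfalso; apply H1; eauto.
  - intros H [N HN]. destruct (H N) as [n [h1 h2]]. specialize (HN n h2). lia.
Qed.

Lemma fin_sub (X Y : nset) : finiteN Y -> (forall n, X n -> Y n) -> finiteN X.
Proof. intros [N HN] H. exists N. auto. Qed.

Lemma fin_union (X Y : nset) : finiteN X -> finiteN Y -> finiteN (fun n => X n \/ Y n).
Proof. intros [N1 H1] [N2 H2]. exists (N1 + N2). intros n [h|h]; [apply H1 in h|apply H2 in h]; lia. Qed.

Lemma inf_sub (X Y : nset) : infiniteN X -> (forall n, X n -> Y n) -> infiniteN Y.
Proof. intros H1 H2 H3. apply H1. eapply fin_sub; eauto. Qed.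

Lemma inf_minus_fin (X Y : nset) : infiniteN X -> finiteN Y -> infiniteN (fun n => X n /\ ~ Y n).
Proof.
  intros H1 H2 H3. apply H1. eapply fin_sub. apply (fin_union _ _ H3 H2).
  intros n h. destruct (classic (Y n)); auto.
Qed.

Lemma sstar_iff X Y : subseteq_star X Y <-> exists M, forall n, M <= n -> X n -> Y n.
Proof.
  split.
  - intros [N HN]. exists N. intros n h1 h2. apply NNPP; intro h3. specialize (HN n (conj h2 h3)). lia.
  - intros [M HM]. exists M. intros n [h1 h2]. destruct (le_lt_dec M n); auto. exfalso; eauto.
Qed.

Lemma sstar_trans X Y Z : subseteq_star X Y -> subseteq_star Y Z -> subseteq_star X Z.
Proof.
  rewrite !sstar_iff. intros [M1 H1] [M2 H2]. exists (M1 + M2). intros n h x. apply H2; [lia|]. apply H1; auto; lia.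
Qed.

Lemma sstar_sub X Y Z : subseteq_star X Y -> (forall n, Z n -> X n) -> subseteq_star Z Y.
Proof. rewrite !sstar_iff. intros [M H] H'. exists M. auto. Qed.

Lemma sstar_weak X Y Z : subseteq_star X Y -> (forall n, Y n -> Z n) -> subseteq_star X Z.
Proof. rewrite !sstar_iff. intros [M H] H'. exists M. auto. Qed.

Lemma sstar_union X Y Z : subseteq_star X Z -> subseteq_star Y Z -> subseteq_star (fun n => X n \/ Y n) Z.
Proof. rewrite !sstar_iff. intros [M1 H1] [M2 H2]. exists (M1+M2). intros n h [x|x]; [apply H1|apply H2]; auto; lia. Qed.

Lemma le_star_refl e : le_star e e.
Proof. exists 0. intros n _ h. split; auto. split; auto. Qed.

Lemma le_star_trans e f g : le_star e f -> le_star f g -> le_star e g.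
Proof.
  intros [N1 H1] [N2 H2]. exists (N1 + N2). intros n hn hg.
  destruct (H2 n ltac:(lia) hg) as [hf [e1 e2]]. destruct (H1 n ltac:(lia) hf) as [he [e3 e4]].
  split; auto. split; [lia|]. intros l h1 h2. rewrite e4 by auto. apply e2; auto; lia.
Qed.

Lemma list_bound {T} (l : list T) (Q : T -> nat -> Prop) :
  (forall x, In x l -> exists N, forall t, N <= t -> Q x t) ->
  exists N, forall t, N <= t -> forall x, In x l -> Q x t.
Proof.
  induction l as [|a l IH]; intros H.
  - exists 0. intros t _ x [].
  - destruct (H a (or_introl eq_refl)) as [N1 H1].
    destruct IH as [N2 H2]. { intros x hx; apply H; right; auto. }
    exists (N1 + N2). intros t ht x [<-|hx]; [apply H1|apply H2]; auto; lia.
Qed.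

Lemma pigeon (D : nset) (Q : nat -> Prop) : infiniteN D ->
  exists D', (forall t, D' t -> D t) /\ infiniteN D' /\ forall t1 t2, D' t1 -> D' t2 -> (Q t1 <-> Q t2).
Proof.
  intros HD. destruct (classic (infiniteN (fun t => D t /\ Q t))) as [h|h].
  - exists (fun t => D t /\ Q t). split; [tauto|]. split; auto. intros t1 t2 [_ a] [_ b]; tauto.
  - exists (fun t => D t /\ ~ Q t). split; [tauto|]. split.
    + intro hf. apply HD. apply NNPP in h. eapply fin_sub. apply (fin_union _ _ h hf).
      intros n hn. destruct (classic (Q n)); auto.
    + intros t1 t2 [_ a] [_ b]; tauto.
Qed.

Lemma sparsify (D : nset) (h : nat -> nat) : infiniteN D ->
  exists D', (forall t, D' t -> D t) /\ infiniteN D' /\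
    forall t t', D' t -> D' t' -> t < t' -> h t <= t'.
Proof.
  intros HD. rewrite inf_iff in HD.
  assert (nx : forall K, {n | K <= n /\ D n}).
  { intro K. apply constructive_indefinite_description. auto. }
  set (nxt := fun K => proj1_sig (nx K)).
  assert (Hn : forall K, K <= nxt K /\ D (nxt K)) by (intro K; exact (proj2_sig (nx K))).
  set (d := fix d i := match i with 0 => nxt 0 | S i => nxt (max (h (d i)) (S (d i))) end).
  assert (dS : forall i, max (h (d i)) (S (d i)) <= d (S i)) by (intro i; apply Hn).
  assert (dmono : forall i j, i < j -> d i < d j /\ h (d i) <= d j).
  { intros i j hij. induction hij.
    - specialize (dS i). lia.
    - specialize (dS m). lia. }
  assert (dge : forall i, i <= d i).
  { induction i; [lia|]. specialize (dS i); lia. }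
  exists (fun t => exists i, d i = t). split; [|split].
  - intros t [i <-]. destruct i; apply Hn.
  - rewrite inf_iff. intro K. exists (d K). split; eauto.
  - intros t t' [i <-] [j <-] hlt. destruct (lt_eq_lt_dec i j) as [[hij| ->]|hji].
    + apply dmono; auto.
    + lia.
    + specialize (dmono _ _ hji). lia.
Qed.

Fixpoint mk (f : nat -> bool) (w : nat) : nat :=
  match w with 0 => 0 | S w' => if f 0 then 2 * mk (fun j => f (S j)) w' + 1 else 2 * mk (fun j => f (S j)) w' end.

Lemma mk_testbit w : forall f j, j < w -> Nat.testbit (mk f w) j = f j.
Proof.
  induction w; intros f j hj; [lia|]. cbn [mk].
  destruct j.
  - destruct (f 0) eqn:E; [apply Nat.testbit_odd_0|apply Nat.testbit_even_0].
  - destruct (f 0) eqn:E.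
    + rewrite Nat.testbit_odd_succ by lia. exact (IHw (fun j => f (S j)) j ltac:(lia)).
    + rewrite Nat.testbit_even_succ by lia. exact (IHw (fun j => f (S j)) j ltac:(lia)).
Qed.

Lemma mk_lt w : forall f, mk f w < 2 ^ w.
Proof.
  induction w; intros f; simpl; [lia|]. specialize (IHw (fun j => f (S j))). destruct (f 0); lia.
Qed.

Definition code (t k m : nat) : nat := Cantor.to_nat (t, Cantor.to_nat (k, m)).
Definition dt (u : nat) := fst (Cantor.of_nat u).
Definition dk (u : nat) := fst (Cantor.of_nat (snd (Cantor.of_nat u))).
Definition dm (u : nat) := snd (Cantor.of_nat (snd (Cantor.of_nat u))).

Lemma dec_code t k m : dt (code t k m) = t /\ dk (code t k m) = k /\ dm (code t k m) = m.
Proof. unfold dt, dk, dm, code. rewrite !Cantor.cancel_of_to. cbn [fst snd]. rewrite !Cantor.cancel_of_to. auto. Qed.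

Lemma code_dec u : code (dt u) (dk u) (dm u) = u.
Proof.
  unfold dt, dk, dm, code. rewrite <- surjective_pairing. rewrite Cantor.cancel_to_of.
  rewrite <- surjective_pairing. apply Cantor.cancel_to_of.
Qed.

Lemma code_ge t k m : t <= code t k m /\ k <= code t k m.
Proof.
  unfold code. pose proof (Cantor.to_nat_non_decreasing t (Cantor.to_nat (k, m))).
  pose proof (Cantor.to_nat_non_decreasing k m). lia.
Qed.

Lemma to_nat_mono a b a' b' : a <= a' -> b <= b' -> Cantor.to_nat (a, b) <= Cantor.to_nat (a', b').
Proof.
  intros h1 h2. pose proof (Cantor.to_nat_spec a b). pose proof (Cantor.to_nat_spec a' b').
  assert ((b + a) * S (b + a) <= (b' + a') * S (b' + a')) by (apply Nat.mul_le_mono; lia). lia.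
Qed.

Lemma code_mono t k m t' k' m' : t <= t' -> k <= k' -> m <= m' -> code t k m <= code t' k' m'.
Proof. intros. unfold code. apply to_nat_mono; auto. apply to_nat_mono; auto. Qed.

Lemma dt_le u : dt u <= u.
Proof. rewrite <- (code_dec u) at 2. apply code_ge. Qed.
Lemma dk_le u : dk u <= u.
Proof. rewrite <- (code_dec u) at 2. apply code_ge. Qed.

Lemma least_ex (P : nat -> Prop) n : P n -> exists m, P m /\ forall k, P k -> m <= k.
Proof.
  induction n as [n IH] using lt_wf_ind. intros Hn.
  destruct (classic (exists k, P k /\ k < n)) as [[k [hk1 hk2]]|h].
  - apply (IH k hk2 hk1).
  - exists n. split; auto. intros k hk. destruct (le_lt_dec n k); auto. exfalso; eauto.
Qed.

Lemma mk_bits (f : nat -> nat -> bool) t w l : t <= l -> l < t + w ->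
  Nat.testbit (mk (fun j => f t (t + j)) w) (l - t) = f t l.
Proof. intros h1 h2. rewrite mk_testbit by lia. f_equal. lia. Qed.

Lemma cond_bound (P Q : nset) (C : Prop) : (C -> subseteq_star P Q) -> exists M, forall n, M <= n -> P n -> C -> Q n.
Proof.
  intros H. destruct (classic C) as [c|c].
  - destruct (proj1 (sstar_iff _ _) (H c)) as [M HM]. exists M; auto.
  - exists 0. intros; contradiction.
Qed.

Definition Sp (e : seqS) := forall t t', sdom e t -> sdom e t' -> t < t' -> send e t <= t'.

Definition Pat (nu : seqS) (X Y : nset) (t : nat) : Prop :=
  exists x y, is_min (fun l => setn nu t l /\ X l) x /\ is_min (fun l => setn nu t l /\ Y l) y /\ x < y.

Section Main.
Variable L : Type.
Variable lt : L -> L -> Prop.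
Hypothesis Hswo : strict_well_order lt.
Hypothesis Hinit : forall x, ~ card_le L (seg lt x).
Hypothesis Hpfam : forall (I : Type) (F : I -> nset), p_family F -> card_le L I.
Hypothesis Hpt : p_lt_t L lt.
Variable B : L -> nset.
Hypothesis HBcl : forall a b, exists c, forall n, B c n <-> (B a n /\ B b n).
Variable kappa : L.
Hypothesis Hknat : card_le nat (seg lt kappa).
Variable A : L -> nset.
Hypothesis HAinf : forall i, lt i kappa -> infiniteN (A i).
Hypothesis HAdec : forall i j, lt i kappa -> lt j kappa -> lt i j -> subseteq_star (A j) (A i).
Hypothesis HAB : forall i a, lt i kappa -> infiniteN (fun n => A i n /\ B a n).

Definition Good e := inSA lt kappa A e /\ Sp e.

Lemma ptool (c : L) (F : L -> nset) :
  (forall l : list L, (forall x, In x l -> lt x c) -> infiniteN (fun n => forall x, In x l -> F x n)) ->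
  exists P, infiniteN P /\ forall x, lt x c -> subseteq_star P (F x).
Proof.
  intros H. apply NNPP. intro Hno. apply (Hinit c). apply (Hpfam (seg lt c) (fun y => F (proj1_sig y))).
  split.
  - intro s. specialize (H (map (@proj1_sig _ _) s)).
    eapply inf_sub. apply H.
    { intros x hx. apply in_map_iff in hx. destruct hx as [y [<- _]]. exact (proj2_sig y). }
    intros n hn y hy. apply hn. apply in_map; auto.
  - intros [P [hP1 hP2]]. apply Hno. exists P. split; auto. intros x hx. apply hP2.
    exists (exist _ x hx). reflexivity.
Qed.

Lemma kappa_pos : exists i0, lt i0 kappa.
Proof. destruct Hknat as [f _]. exists (proj1_sig (f 0)). exact (proj2_sig (f 0)). Qed.

Lemma base_exists : exists e, Good e.
Proof.
  destruct (Hpt (fun i => lt i kappa) A) as [Q [HQ1 HQ2]]; auto.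
  exists (mkS Q S (fun _ _ => true)). split; [split; [|split]|].
  - split; simpl; auto.
  - intros i hi. eapply sstar_sub. apply HQ2. exists i; auto.
    intros l [t [h1 [h2 [h3 _]]]]. simpl in *. replace l with t by lia. auto.
  - intros n hn. exists n. unfold setn; simpl; auto.
  - intros t t' _ _ h. simpl. lia.
Qed.

Lemma succ_step (eta : seqS) (a0 b g : L) : Good eta ->
  exists nu, Good nu /\
   (forall t, sdom nu t -> sdom eta t /\ extends_at eta nu t) /\
   (forall t, sdom nu t -> exists l, setn nu t l /\ B a0 l) /\
   (forall X, choiceXY lt kappa A B b X -> forall t, sdom nu t -> exists l, setn nu t l /\ X l) /\
   (forall Y, choiceXY lt kappa A B g Y -> forall t, sdom nu t -> exists l, setn nu t l /\ Y l) /\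
   (forall X Y, (X = B b \/ X = A b) -> (Y = B g \/ Y = A g) -> forall t1 t2, sdom nu t1 -> sdom nu t2 ->
       (Pat nu X Y t1 <-> Pat nu X Y t2)).
Proof.
  intros [[[Hinf Hlt] [HsA Hne]] HSp].
  destruct (HBcl a0 b) as [c1 Hc1]. destruct (HBcl c1 g) as [c2 Hc2].
  destruct (Hpt (fun i => lt i kappa) (fun i n => A i n /\ B c2 n)) as [P' [HP'1 HP'2]].
  { intros i hi. apply HAB; auto. }
  { intros i j hi hj hij. apply sstar_iff. destruct (proj1 (sstar_iff _ _) (HAdec i j hi hj hij)) as [M HM].
    exists M. intros n hn [x y]. auto. }
  destruct kappa_pos as [i0 Hi0].
  assert (HP'A : forall i, lt i kappa -> subseteq_star P' (A i)).
  { intros i hi. apply (sstar_weak _ (fun n => A i n /\ B c2 n)). apply HP'2. exists i; auto. tauto. }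
  destruct (proj1 (sstar_iff _ _) (HP'2 _ (ex_intro _ i0 (conj Hi0 eq_refl)))) as [M0 HM0].
  destruct (cond_bound P' (A b) (lt b kappa) (HP'A b)) as [Mb HMb].
  destruct (cond_bound P' (A g) (lt g kappa) (HP'A g)) as [Mg HMg].
  set (P'' := fun n => P' n /\ B c2 n /\ (lt b kappa -> A b n) /\ (lt g kappa -> A g n)).
  assert (HP'' : forall K, exists n, K <= n /\ P'' n).
  { intro K. destruct (proj1 (inf_iff P') HP'1 (K + M0 + Mb + Mg)) as [n [hn1 hn2]].
    exists n. split; [lia|]. unfold P''. split; auto. split; [apply HM0; auto; lia|].
    split; intro; [apply HMb|apply HMg]; auto; lia. }
  set (pf := fun t => proj1_sig (constructive_indefinite_description _ (HP'' (send eta t)))).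
  assert (Hpf : forall t, send eta t <= pf t /\ P'' (pf t)).
  { intro t. exact (proj2_sig (constructive_indefinite_description _ (HP'' (send eta t)))). }
  set (sv := fun t l => if l <? send eta t then sval eta t l else l =? pf t).
  set (nu0 := mkS (sdom eta) (fun t => S (pf t)) sv).
  destruct (pigeon (sdom eta) (Pat nu0 (B b) (B g)) Hinf) as [D1 [D1s [D1i D1p]]].
  destruct (pigeon D1 (Pat nu0 (B b) (A g)) D1i) as [D2 [D2s [D2i D2p]]].
  destruct (pigeon D2 (Pat nu0 (A b) (B g)) D2i) as [D3 [D3s [D3i D3p]]].
  destruct (pigeon D3 (Pat nu0 (A b) (A g)) D3i) as [D4 [D4s [D4i D4p]]].
  destruct (sparsify D4 (fun t => S (pf t)) D4i) as [D5 [D5s [D5i D5p]]].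
  assert (D5e : forall t, D5 t -> sdom eta t) by (intros; apply D1s, D2s, D3s, D4s, D5s; auto).
  exists (mkS D5 (fun t => S (pf t)) sv).
  assert (Hset : forall t l, sdom eta t -> (setn (mkS D5 (fun t => S (pf t)) sv) t l <-> setn eta t l \/ l = pf t)).
  { intros t l ht. specialize (Hlt t ht). destruct (Hpf t) as [h1 _]. unfold setn, sv; simpl.
    destruct (Nat.ltb_spec l (send eta t)) as [h|h].
    - split; [intros [? [? ?]]; left; auto|]. intros [[? [? ?]]| ->]; [split; auto; split; auto; lia|lia].
    - split.
      + intros [? [? e]]. right. apply Nat.eqb_eq; auto.
      + intros [[? [? ?]]| ->]; [lia|]. split; [lia|]. split; [lia|]. apply Nat.eqb_refl. }
  assert (Hpt_in : forall t, sdom eta t -> setn (mkS D5 (fun t => S (pf t)) sv) t (pf t)).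
  { intros t ht. apply Hset; auto. }
  split; [split; [split; [split|split]|]|split; [|split; [|split; [|split]]]].
  - simpl. auto.
  - simpl. intros n hn. specialize (Hlt n (D5e n hn)). specialize (Hpf n). lia.
  - intros i hi. eapply sstar_sub. apply sstar_union. apply (HsA i hi). apply (HP'A i hi).
    intros l [t [ht hl]]. simpl in ht. apply Hset in hl; [|auto].
    destruct hl as [hl| ->]; [left; exists t; auto|right; apply Hpf].
  - intros n hn. exists (pf n). apply Hpt_in; auto.
  - intros t t' h1 h2 h3. simpl. apply D5p; auto.
  - intros t ht. split; [auto|]. split; simpl; [specialize (Hpf t); lia|].
    intros l h1 h2. unfold sv. destruct (Nat.ltb_spec l (send eta t)); [auto|lia].
  - intros t ht. exists (pf t). split; [apply Hpt_in; auto|].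
    destruct (Hpf t) as [_ [_ [h _]]]. apply Hc2 in h. apply Hc1. tauto.
  - intros X hX t ht. exists (pf t). split; [apply Hpt_in; auto|].
    destruct (Hpf t) as [_ [_ [h [h' _]]]]. destruct hX as [->|[hb ->]]; [apply Hc2 in h; apply Hc1; tauto|auto].
  - intros Y hY t ht. exists (pf t). split; [apply Hpt_in; auto|].
    destruct (Hpf t) as [_ [_ [h [_ h']]]]. destruct hY as [->|[hb ->]]; [apply Hc2 in h; tauto|auto].
  - intros X Y hX hY t1 t2 h1 h2. simpl in h1, h2.
    change (Pat nu0 X Y t1 <-> Pat nu0 X Y t2).
    assert (h1' := D5s _ h1). assert (h2' := D5s _ h2).
    destruct hX as [->| ->]; destruct hY as [->| ->].
    + apply D1p; apply D2s, D3s, D4s; auto.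
    + apply D2p; apply D3s, D4s; auto.
    + apply D3p; apply D4s; auto.
    + apply D4p; auto.
Qed.


Lemma limit_step (delta : L) (eta : L -> seqS) :
  (forall x, lt x delta -> Good (eta x)) ->
  (forall x y, lt x y -> lt y delta -> le_star (eta x) (eta y)) ->
  exists nu, Good nu /\ forall x, lt x delta -> le_star (eta x) nu.
Proof.
  intros Hgood Hchain.
  destruct Hswo as [Hirr [Htr [Htot Hwf]]].
  destruct Hknat as [f finj].
  set (e := fun n => proj1_sig (f n)).
  assert (He : forall n, lt (e n) kappa) by (intro n; exact (proj2_sig (f n))).
  assert (Heinj : forall n m, e n = e m -> n = m).
  { intros n m h. apply finj. unfold e in h. destruct (f n) as [a ha], (f m) as [b hb]. simpl in h. subst b.
    f_equal. apply proof_irrelevance. }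
  assert (Hc : exists c, (forall x, lt x delta -> lt x c) /\ (forall i, lt i kappa -> lt i c)).
  { destruct (classic (lt delta kappa)) as [h|h].
    - exists kappa. split; eauto.
    - exists delta. split; auto. intros i hi. destruct (Htot delta kappa) as [h'|[h'|h']]; [tauto|subst; auto|eauto]. }
  destruct Hc as [c [Hcd Hck]].
  destruct base_exists as [e0 He0].
  set (Wc := fun u => dt u < dk u /\ exists l, dt u <= l /\ l < dk u /\ Nat.testbit (dm u) (l - dt u) = true).
  set (F := fun x u =>
   (lt x delta -> sdom (eta x) (dt u) /\ send (eta x) (dt u) <= dk u /\
       forall l, dt u <= l -> l < send (eta x) (dt u) -> sval (eta x) (dt u) l = Nat.testbit (dm u) (l - dt u)) /\
   (lt x kappa -> forall l, dt u <= l -> l < dk u -> Nat.testbit (dm u) (l - dt u) = true -> A x l) /\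
   (forall n, e n = x -> n <= dt u) /\ Wc u).
  destruct (ptool c F) as [P [HP1 HP2]].
  { intros l Hl.
    assert (Hbb : exists bb, Good bb /\ ((forall x, In x l -> ~ lt x delta) \/
              exists y, lt y delta /\ bb = eta y /\ forall x, In x l -> lt x delta -> x = y \/ lt x y)).
    { clear Hl. induction l as [|x l IH].
      - exists e0. split; [auto|left; intros x []].
      - destruct IH as [bb [Hbb1 Hbb2]].
        destruct (classic (lt x delta)) as [hx|hx].
        + destruct Hbb2 as [Hn|[y [hy [-> Hy]]]].
          * exists (eta x). split; auto. right. exists x. split; auto. split; auto.
            intros x' [<-|h'] h''; auto. exfalso; eapply Hn; eauto.
          * destruct (Htot x y) as [h|[h|h]].
            -- exists (eta y). split; auto. right. exists y. split; auto. split; auto.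
               intros x' [<-|h'] h''; auto.
            -- exists (eta y). split; auto. right. exists y. split; auto. split; auto.
               intros x' [<-|h'] h''; auto.
            -- exists (eta x). split; auto. right. exists x. split; auto. split; auto.
               intros x' [<-|h'] h''; auto. destruct (Hy x' h' h'') as [<-|h3]; eauto.
        + exists bb. split; auto. destruct Hbb2 as [Hn|[y [hy [-> Hy]]]].
          * left. intros x' [<-|h']; auto.
          * right. exists y. split; auto. split; auto. intros x' [<-|h'] h''; [contradiction|auto]. }
    destruct Hbb as [bb [Hbb1 Hbb2]].
    assert (Hle : forall x, In x l -> lt x delta -> le_star (eta x) bb).
    { intros x hx hxd. destruct Hbb2 as [Hn|[y [hy [-> Hy]]]]; [exfalso; eapply Hn; eauto|].
      destruct (Hy x hx hxd) as [->|h]; [apply le_star_refl|auto]. }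
    destruct Hbb1 as [[[Hbi Hblt] [HbA Hbne]] HbSp].
    destruct (list_bound l (fun x t => sdom bb t ->
        (lt x delta -> sdom (eta x) t /\ extends_at (eta x) bb t) /\
        (lt x kappa -> forall l', setn bb t l' -> A x l') /\ (forall n, e n = x -> n <= t))) as [N HN].
    { intros x hx.
      assert (h1 : exists N1, forall t, N1 <= t -> sdom bb t -> lt x delta -> sdom (eta x) t /\ extends_at (eta x) bb t).
      { destruct (classic (lt x delta)) as [h|h]; [|exists 0; intros; contradiction].
        destruct (Hle x hx h) as [N1 HN1]. exists N1. auto. }
      assert (h2 : exists N2, forall t, N2 <= t -> lt x kappa -> forall l', setn bb t l' -> sdom bb t -> A x l').
      { destruct (classic (lt x kappa)) as [h|h]; [|exists 0; intros; contradiction].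
        destruct (proj1 (sstar_iff _ _) (HbA x h)) as [N2 HN2]. exists N2.
        intros t ht _ l' hl' hd. apply HN2; [destruct hl'; lia|]. exists t; auto. }
      assert (h3 : exists N3, forall t, N3 <= t -> forall n, e n = x -> n <= t).
      { destruct (classic (exists n0, e n0 = x)) as [[n0 hn0]|h].
        - exists n0. intros t ht n hn. rewrite <- hn0 in hn. apply Heinj in hn. lia.
        - exists 0. intros t _ n hn. exfalso; eauto. }
      destruct h1 as [N1 H1], h2 as [N2 H2], h3 as [N3 H3]. exists (N1 + N2 + N3).
      intros t ht hb. split; [|split].
      - apply H1; auto; lia.
      - intros hk l' hl'. apply (H2 t); auto; lia.
      - apply H3; lia. }
    apply inf_iff. intro K.
    destruct (proj1 (inf_iff _) Hbi (K + N)) as [t [ht1 ht2]].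
    set (m := mk (fun j => sval bb t (t + j)) (send bb t - t)).
    exists (code t (send bb t) m). destruct (dec_code t (send bb t) m) as [E1 [E2 E3]].
    split; [pose proof (code_ge t (send bb t) m); lia|].
    intros x hx. destruct (HN t ltac:(lia) x hx ht2) as [Hz [Ha Hv]].
    specialize (Hblt t ht2).
    unfold F, Wc. rewrite E1, E2, E3. split; [|split; [|split]].
    - intro hxd. destruct (Hz hxd) as [hd [hs hv]]. split; auto. split; auto.
      intros l' h1 h2. rewrite hv by auto. unfold m. rewrite mk_bits by lia. reflexivity.
    - intros hxk l' h1 h2 h3. apply (Ha hxk). unfold m in h3. rewrite mk_bits in h3 by lia.
      split; auto.
    - auto.
    - split; auto. destruct (Hbne t ht2) as [l' [h1 [h2 h3]]]. exists l'. split; auto. split; auto.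
      unfold m. rewrite mk_bits by lia. auto. }
  assert (HPF : forall x, lt x c -> exists M, forall u, M <= u -> P u -> F x u).
  { intros x hx. apply sstar_iff. auto. }
  set (Dom0 := fun t => exists u, P u /\ dt u = t /\ Wc u).
  assert (HD0 : infiniteN Dom0).
  { apply inf_iff. intro K. destruct (HPF (e K) (Hck _ (He K))) as [M HM].
    destruct (proj1 (inf_iff _) HP1 M) as [u [hu1 hu2]]. destruct (HM u hu1 hu2) as [_ [_ [hv hw]]].
    exists (dt u). split; [apply hv; auto|]. exists u; auto. }
  assert (ch : forall t, {u | Dom0 t -> P u /\ dt u = t /\ Wc u}).
  { intro t. apply constructive_indefinite_description.
    destruct (classic (Dom0 t)) as [[u hu]|hn]; [exists u; auto|exists 0; intro; contradiction]. }
  set (uf := fun t => proj1_sig (ch t)).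
  assert (Huf : forall t, Dom0 t -> P (uf t) /\ dt (uf t) = t /\ Wc (uf t)) by (intro t; exact (proj2_sig (ch t))).
  destruct (sparsify Dom0 (fun t => dk (uf t)) HD0) as [D' [D's [D'i D'p]]].
  exists (mkS D' (fun t => dk (uf t)) (fun t l => Nat.testbit (dm (uf t)) (l - t))).
  split; [split; [split; [split|split]|]|].
  - simpl; auto.
  - simpl. intros t ht. destruct (Huf t (D's t ht)) as [_ [h [h' _]]]. rewrite h in h'. auto.
  - intros i hi. destruct (HPF i (Hck i hi)) as [M HM]. apply sstar_iff. exists M.
    intros l hl [t [ht [h1 [h2 h3]]]]. simpl in *. destruct (Huf t (D's t ht)) as [hp [hd _]].
    destruct (le_lt_dec M (uf t)) as [hm|hm].
    + destruct (HM _ hm hp) as [_ [hr _]]. rewrite hd in hr. apply (hr hi l); auto.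
    + pose proof (dk_le (uf t)). lia.
  - intros t ht. destruct (Huf t (D's t ht)) as [_ [hd [_ [l [h1 [h2 h3]]]]]]. rewrite hd in *.
    exists l. split; auto.
  - intros t t' h1 h2 h3. apply D'p; auto.
  - intros x hx. destruct (HPF x (Hcd x hx)) as [M HM]. exists M. intros t ht hd. simpl in hd.
    destruct (Huf t (D's t hd)) as [hp [hdt _]].
    assert (hu : M <= uf t) by (pose proof (dt_le (uf t)); lia).
    destruct (HM _ hu hp) as [hz _]. rewrite hdt in hz. destruct (hz hx) as [z1 [z2 z3]].
    split; auto. split; simpl; auto.
Qed.


Lemma final_step (eta : L -> seqS) (x0 : L) :
  (forall x, inS (eta x) /\ Sp (eta x)) -> (forall x y, lt x y -> le_star (eta x) (eta y)) ->
  exists nu, inS nu /\ forall x, le_star (eta x) nu.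
Proof.
  intros Hgood Hchain.
  destruct (Hpt (fun _ => True) (fun x => sdom (eta x))) as [T [HT1 HT2]].
  { intros a _. apply (Hgood a). }
  { intros a b _ _ hab. destruct (Hchain a b hab) as [N HN]. apply sstar_iff. exists N.
    intros n hn hd. apply (HN n hn hd). }
  assert (HTd : forall x, exists N, forall t, N <= t -> T t -> sdom (eta x) t).
  { intro x. apply sstar_iff. apply HT2. exists x; auto. }
  set (isnext := fun t k => T k /\ t < k /\ forall t'', T t'' -> t < t'' -> k <= t'').
  assert (Hnext : forall t, exists k, isnext t k).
  { intro t. destruct (proj1 (inf_iff _) HT1 (S t)) as [t1 [h1 h2]].
    destruct (least_ex (fun k => T k /\ t < k) t1 (conj h2 h1)) as [k [[hk1 hk2] hk3]].
    exists k. repeat split; auto. }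
  set (Om := fun u => T (dt u) /\ isnext (dt u) (dk u) /\ dm u < 2 ^ dk u).
  assert (Hbound : forall N0 t1 u, T t1 -> N0 < t1 -> Om u -> dt u < N0 -> u <= code N0 t1 (2 ^ t1)).
  { intros N0 t1 u h1 h2 [_ [[_ [hk1 hk2]] hm]] h3.
    assert (dk u <= t1) by (apply hk2; auto; lia).
    rewrite <- (code_dec u). apply code_mono; try lia.
    assert (2 ^ dk u <= 2 ^ t1) by (apply Nat.pow_le_mono_r; lia). lia. }
  set (Zf := fun x u => Om u /\ ((sdom (eta x) (dt u) /\ send (eta x) (dt u) <= dk u) ->
        forall l, dt u <= l -> l < send (eta x) (dt u) -> sval (eta x) (dt u) l = Nat.testbit (dm u) (l - dt u))).
  destruct (Hpt (fun _ => True) Zf) as [P [HP1 HP2]].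
  { intros x _. apply inf_iff. intro K.
    destruct (proj1 (inf_iff _) HT1 K) as [t [ht1 ht2]]. destruct (Hnext t) as [k hk].
    set (m := mk (fun j => sval (eta x) t (t + j)) (k - t)).
    exists (code t k m). destruct (dec_code t k m) as [E1 [E2 E3]].
    split; [pose proof (code_ge t k m); lia|].
    unfold Zf, Om. rewrite E1, E2, E3. split; [split; [auto|split; [auto|]]|].
    - unfold m. eapply Nat.lt_le_trans. apply mk_lt. apply Nat.pow_le_mono_r; lia.
    - intros [hd hs] l h1 h2. unfold m. rewrite mk_bits; auto. destruct hk as [_ [hk _]]. lia. }
  { intros x y _ _ hxy.
    destruct (Hchain x y hxy) as [N1 HN1]. destruct (HTd y) as [N2 HN2].
    set (N0 := N1 + N2).
    destruct (proj1 (inf_iff _) HT1 (S N0)) as [t1 [ht1 ht1']].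
    apply sstar_iff. exists (S (code N0 t1 (2 ^ t1))). intros u hu [hOm hz].
    destruct (le_lt_dec N0 (dt u)) as [hge|hlt]; [|specialize (Hbound N0 t1 u ht1' ltac:(lia) hOm hlt); lia].
    split; auto. intros [hdx hsx] l h1 h2.
    destruct hOm as [hT [[hkT [hk1 hk2]] hm]].
    assert (hdy : sdom (eta y) (dt u)) by (apply HN2; auto; lia).
    destruct (HN1 (dt u) ltac:(lia) hdy) as [_ [hs hv]].
    rewrite hv by auto. apply hz; auto; [|lia].
    split; auto. apply (proj2 (Hgood y)); auto. apply HN2; auto; lia. }
  assert (HPZ : forall x, exists M, forall u, M <= u -> P u -> Zf x u).
  { intros x. apply sstar_iff. apply HP2. exists x; auto. }
  set (Dom := fun t => exists u, P u /\ dt u = t /\ Om u).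
  assert (HDom : infiniteN Dom).
  { apply inf_iff. intro K. destruct (HPZ x0) as [M0 HM0].
    destruct (proj1 (inf_iff _) HT1 (S K)) as [t1 [ht1 ht1']].
    destruct (proj1 (inf_iff _) HP1 (M0 + S (code K t1 (2 ^ t1)))) as [u [hu1 hu2]].
    destruct (HM0 u ltac:(lia) hu2) as [hOm _].
    destruct (le_lt_dec K (dt u)) as [hge|hlt]; [|specialize (Hbound K t1 u ht1' ltac:(lia) hOm hlt); lia].
    exists (dt u). split; auto. exists u; auto. }
  assert (ch : forall t, {u | Dom t -> P u /\ dt u = t /\ Om u}).
  { intro t. apply constructive_indefinite_description.
    destruct (classic (Dom t)) as [[u hu]|hn]; [exists u; auto|exists 0; intro; contradiction]. }
  set (uf := fun t => proj1_sig (ch t)).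
  assert (Huf : forall t, Dom t -> P (uf t) /\ dt (uf t) = t /\ Om (uf t)) by (intro t; exact (proj2_sig (ch t))).
  exists (mkS Dom (fun t => dk (uf t)) (fun t l => Nat.testbit (dm (uf t)) (l - t))).
  split; [split|].
  - simpl. auto.
  - simpl. intros t ht. destruct (Huf t ht) as [_ [hd [_ [[_ [h _]] _]]]]. rewrite hd in h. auto.
  - intros x. destruct (HPZ x) as [M HM]. destruct (HTd x) as [N' HN'].
    exists (M + N'). intros t ht hd. simpl in hd.
    destruct (Huf t hd) as [hp [hdt hOm]].
    assert (hu : M <= uf t) by (pose proof (dt_le (uf t)); lia).
    destruct (HM _ hu hp) as [_ hz]. rewrite hdt in hz.
    destruct hOm as [hT [[hkT [hk1 hk2]] hm]]. rewrite hdt in *.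
    assert (hdx : sdom (eta x) t) by (apply HN'; auto; lia).
    assert (hsx : send (eta x) t <= dk (uf t)).
    { apply (proj2 (Hgood x)); auto. apply HN'; auto; lia. }
    split; auto. split; simpl; auto.
Qed.


Variable pr : L -> L -> L.
Hypothesis Hpr_inj : forall a1 a2 b1 b2, pr a1 a2 = pr b1 b2 -> a1 = b1 /\ a2 = b2.
Hypothesis Hpr_surj : forall c, exists a1 a2, pr a1 a2 = c.

Definition SuccReq (a : L) (nu : seqS) : Prop :=
  forall a0, is_succ lt a0 a ->
   (forall t, sdom nu t -> exists l, setn nu t l /\ B a0 l) /\
   (forall b g, pr b g = a0 -> forall X Y, choiceXY lt kappa A B b X -> choiceXY lt kappa A B g Y ->
         (forall n, sdom nu n ->
            (exists l, setn nu n l /\ X l) /\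
            (exists l, setn nu n l /\ Y l)) /\
         (forall n1 n2 x1 y1 x2 y2, sdom nu n1 -> sdom nu n2 ->
            is_min (fun l => setn nu n1 l /\ X l) x1 ->
            is_min (fun l => setn nu n1 l /\ Y l) y1 ->
            is_min (fun l => setn nu n2 l /\ X l) x2 ->
            is_min (fun l => setn nu n2 l /\ Y l) y2 ->
            (x1 < y1 <-> x2 < y2))).

Definition GoalR (a : L) (nu : seqS) (f : forall b, lt b a -> seqS) : Prop :=
  Good nu /\ (forall b (h : lt b a), le_star (f b h) nu) /\ SuccReq a nu.

Definition dflt : seqS := mkS (fun _ => False) (fun _ => 0) (fun _ _ => false).

Definition stepR (a : L) (f : forall b, lt b a -> seqS) : seqS :=
  match excluded_middle_informative (exists nu, GoalR a nu f) with
  | left h => proj1_sig (constructive_indefinite_description _ h)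
  | right _ => dflt
  end.

Lemma min_uniq (P : nset) x y : is_min P x -> is_min P y -> x = y.
Proof. intros [h1 h2] [h3 h4]. specialize (h2 y h3). specialize (h4 x h1). lia. Qed.

Lemma construction : exists eta : L -> seqS,
  (forall a, Good (eta a)) /\ (forall a b, lt a b -> le_star (eta a) (eta b)) /\ (forall a, SuccReq a (eta a)).
Proof.
  destruct Hswo as [Hirr [Htr [Htot Hwf]]].
  set (eta := Fix Hwf (fun _ => seqS) stepR).
  assert (Heq : forall a, eta a = stepR a (fun b _ => eta b)).
  { intro a. unfold eta. apply (Fix_eq Hwf (fun _ => seqS) stepR). intros x f g H.
    assert (f = g) as ->; [|reflexivity].
    apply functional_extensionality_dep; intro y. apply functional_extensionality_dep; intro p. apply H. }
  assert (Hall : forall a, GoalR a (eta a) (fun b _ => eta b)).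
  { intro a. induction a as [a IH] using (well_founded_induction Hwf).
    assert (Hex : exists nu, GoalR a nu (fun b _ => eta b)).
    { destruct (classic (exists a0, is_succ lt a0 a)) as [[a0 Hs]|Hns].
      - destruct (Hpr_surj a0) as [b [g Hbg]].
        destruct (IH a0 (proj1 Hs)) as [G0 [C0 _]].
        destruct (succ_step (eta a0) a0 b g G0) as [nu [Gn [Ext [Hc [HdX [HdY Hpat]]]]]].
        assert (Lnu : le_star (eta a0) nu) by (exists 0; intros n _ hn; auto).
        exists nu. split; [auto|split].
        + intros c hc. destruct (Htot c a0) as [h|[->|h]].
          * eapply le_star_trans; [apply (C0 c h)|auto].
          * auto.
          * exfalso. apply (proj2 Hs c). auto.
        + intros a0' Hs'.
          assert (a0' = a0).
          { destruct (Htot a0' a0) as [h|[h|h]]; auto.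
            - exfalso. apply (proj2 Hs' a0). split; auto. apply Hs.
            - exfalso. apply (proj2 Hs a0'). split; auto. apply Hs'. }
          subst a0'. split; auto.
          intros b' g' Hbg' X Y hX hY. rewrite <- Hbg in Hbg'. destruct (Hpr_inj _ _ _ _ Hbg') as [-> ->].
          split.
          * intros n hn. split; [apply HdX|apply HdY]; auto.
          * intros n1 n2 x1 y1 x2 y2 h1 h2 m1 m2 m3 m4.
            assert (hX' : X = B b \/ X = A b) by (destruct hX as [->|[_ ->]]; auto).
            assert (hY' : Y = B g \/ Y = A g) by (destruct hY as [->|[_ ->]]; auto).
            specialize (Hpat X Y hX' hY' n1 n2 h1 h2). unfold Pat in Hpat.
            split; intro hlt.
            -- destruct (proj1 Hpat (ex_intro _ x1 (ex_intro _ y1 (conj m1 (conj m2 hlt))))) as [x [y [q1 [q2 q3]]]].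
               rewrite <- (min_uniq _ _ _ q1 m3), <- (min_uniq _ _ _ q2 m4). auto.
            -- destruct (proj2 Hpat (ex_intro _ x2 (ex_intro _ y2 (conj m3 (conj m4 hlt))))) as [x [y [q1 [q2 q3]]]].
               rewrite <- (min_uniq _ _ _ q1 m1), <- (min_uniq _ _ _ q2 m2). auto.
      - destruct (limit_step a eta) as [nu [Gn Ln]].
        + intros x hx. apply (IH x hx).
        + intros x y hxy hy. destruct (IH y hy) as [_ [C _]]. apply (C x hxy).
        + exists nu. split; [auto|split].
          * intros c hc. apply Ln; auto.
          * intros a0 Hs. exfalso; eauto. }
    rewrite Heq. unfold stepR. destruct (excluded_middle_informative _) as [h|h].
    - exact (proj2_sig (constructive_indefinite_description _ h)).
    - contradiction. }
  exists eta. split; [|split].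
  - intro a. apply (Hall a).
  - intros a b hab. destruct (Hall b) as [_ [C _]]. apply (C a hab).
  - intro a. apply (Hall a).
Qed.

End Main.

Theorem lemma2p8
  (L : Type) (ltL : L -> L -> Prop)
  (Hp : lambda_is_p L ltL) (Hpt : p_lt_t L ltL)
  (B : L -> nset) (HB : exemplifies_p L B)
  (kappa : L) (Hkappa : regular_cardinal ltL kappa)
  (A : L -> nset)
  (HAinf : forall i, ltL i kappa -> infiniteN (A i))
  (HAdec : forall i j, ltL i kappa -> ltL j kappa -> ltL i j -> subseteq_star (A j) (A i))
  (HAB : forall i a, ltL i kappa -> infiniteN (fun n => A i n /\ B a n))
  (HApi : forall X, pseudo_int (fun Y => exists i, ltL i kappa /\ Y = A i) X ->
            exists a, finiteN (fun n => X n /\ B a n))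
  (pr : L -> L -> L)
  (Hpr_inj : forall a1 a2 b1 b2, pr a1 a2 = pr b1 b2 -> a1 = b1 /\ a2 = b2)
  (Hpr_surj : forall c, exists a1 a2, pr a1 a2 = c)
  (Hpr_ge : forall a1 a2, (a1 = pr a1 a2 \/ ltL a1 (pr a1 a2)) /\
                          (a2 = pr a1 a2 \/ ltL a2 (pr a1 a2))) :
  exists (eta : L -> seqS) (etaL : seqS),
    (* (a) *)
    (forall a, inSA ltL kappa A (eta a)) /\ inS etaL /\
    (* (b) *)
    (forall a b, ltL a b -> le_star (eta a) (eta b)) /\
    (forall a, le_star (eta a) etaL) /\
    (* (c) *)
    (forall a a', is_succ ltL a a' ->
       exists N, forall n, N <= n -> sdom (eta a') n ->
         exists l, setn (eta a') n l /\ B a l) /\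
    (* (d)+(e) *)
    (forall b g a', is_succ ltL (pr b g) a' ->
       forall X Y, choiceXY ltL kappa A B b X -> choiceXY ltL kappa A B g Y ->
         (forall n, sdom (eta a') n ->
            (exists l, setn (eta a') n l /\ X l) /\
            (exists l, setn (eta a') n l /\ Y l)) /\
         (forall n1 n2 x1 y1 x2 y2, sdom (eta a') n1 -> sdom (eta a') n2 ->
            is_min (fun l => setn (eta a') n1 l /\ X l) x1 ->
            is_min (fun l => setn (eta a') n1 l /\ Y l) y1 ->
            is_min (fun l => setn (eta a') n2 l /\ X l) x2 ->
            is_min (fun l => setn (eta a') n2 l /\ Y l) y2 ->
            (x1 < y1 <-> x2 < y2))).
Proof.
  destruct Hp as [Hswo [Hinit [_ Hpfam]]].
  destruct HB as [_ [HBcl _]].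
  destruct Hkappa as [_ [Hknat _]].
  destruct (construction L ltL Hswo Hinit Hpfam Hpt B HBcl kappa Hknat A HAinf HAdec HAB pr Hpr_inj Hpr_surj)
    as [eta [Hg [Hc Hs]]].
  destruct (final_step L ltL Hpt eta kappa) as [etaL [HL1 HL2]].
  { intro x. destruct (Hg x) as [[h _] h']. auto. }
  { exact Hc. }
  exists eta, etaL.
  split; [intro a; apply (Hg a)|].
  split; [auto|].
  split; [exact Hc|].
  split; [exact HL2|].
  split.
  - intros a a' Hs'. exists 0. intros n _ hn. apply (proj1 (Hs a' a Hs')); auto.
  - intros b g a' Hs' X Y hX hY. apply (proj2 (Hs a' (pr b g) Hs') b g eq_refl X Y hX hY).
Qed.
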